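(* Let $M$ be a DFA with $n$ states. Then ${\rm fact}(L(M))$ can be accepted by a DFA with at most $2^{n-1}$ states, and this bound is tight: for every $n\ge1$ there exists a DFA $M$ with $n$ states such that the minimal DFA accepting ${\rm fact}(L(M))$ has exactly $2^{n-1}$ states.
   Context: DFAs are complete (one initial state, a total transition function $Q\times\Sigma\to Q$); the minimal DFA of a regular language is the complete DFA with fewest states accepting it. ${\rm fact}(L)$ is the set of all factors (contiguous subwords) of words in $L$. *)

(* Defs.v *)
From mathcomp Require Import all_boot.
Set Implicit Arguments. Unset Strict Implicit. Unset Printing Implicit Defensive.

Record dfa (Sigma : finType) := DFA {
  state : finType;
  init : state;
  delta : state -> Sigma -> state;
  final : pred state }.

Definition delta_star (Sigma : finType) (M : dfa Sigma) (q : state M) (w : seq Sigma)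
  : state M := foldl (@delta Sigma M) q w.

Definition language (Sigma : finType) := seq Sigma -> Prop.

Definition lang (Sigma : finType) (M : dfa Sigma) : language Sigma :=
  fun w => @final Sigma M (delta_star (@init Sigma M) w).

Definition fact (Sigma : finType) (L : language Sigma) : language Sigma :=
  fun w => exists u v, L (u ++ w ++ v).

Definition accepts (Sigma : finType) (M : dfa Sigma) (L : language Sigma) : Prop :=
  forall w, lang M w <-> L w.

Definition minimal_dfa_size (Sigma : finType) (L : language Sigma) (k : nat) : Prop :=
  (exists M : dfa Sigma, accepts M L /\ #|state M| = k) /\
  (forall M : dfa Sigma, accepts M L -> k <= #|state M|).

(* Main.v *)
Require Import Defs.
From mathcomp Require Import all_boot.
From Stdlib Require Import ClassicalEpsilon.
Set Implicit Arguments. Unset Strict Implicit. Unset Printing Implicit Defensive.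

Definition pb (P : Prop) : bool := if excluded_middle_informative P then true else false.
Lemma pbP (P : Prop) : reflect P (pb P).
Proof. rewrite /pb; case: excluded_middle_informative => h; by constructor. Qed.

Lemma ds_cons (S : finType) (M : dfa S) (q : state M) a w :
  delta_star q (a :: w) = delta_star (delta q a) w.
Proof. by []. Qed.
Lemma ds_cat (S : finType) (M : dfa S) (q : state M) u w :
  delta_star q (u ++ w) = delta_star (delta_star q u) w.
Proof. exact: foldl_cat. Qed.

Section Part1.
Variables (Sigma : finType) (M : dfa Sigma).
Definition reach (q : state M) := exists u, delta_star (init M) u = q.
Definition coreach (q : state M) := exists v, final (delta_star q v).
Definition useful (q : state M) : bool := pb (reach q /\ coreach q).
Definition sub : finType := {q : state M | useful q}.
Definition step (T : {set sub}) (a : Sigma) : {set sub} :=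
  [set p | [exists q in T, delta (val q) a == val p]].
Definition M1 : dfa Sigma := @DFA Sigma {set sub} [set: sub] step (fun T => T != set0).

Lemma key w : forall (T : {set sub}) (p : sub),
  p \in @delta_star _ M1 T w <-> exists2 q, q \in T & delta_star (val q) w = val p.
Proof.
elim: w => [|a w IH] T p.
  split; first by move=> h; exists p.
  by case=> q qT /val_inj <-.
rewrite ds_cons IH; split.
  case=> r; rewrite inE => /exists_inP [q qT /eqP e] <-.
  by exists q => //; rewrite ds_cons /= e.
case=> q qT; rewrite ds_cons => e.
have uq := valP q; have up := valP p.
move: uq up => /pbP [[u hu] _] /pbP [_ [v hv]].
have ur : useful (delta (val q) a).
  apply/pbP; split.
    by exists (rcons u a); rewrite -cats1 ds_cat hu.
  by exists (w ++ v); rewrite ds_cat e.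
exists (Sub (delta (val q) a) ur : sub) => //.
by rewrite inE; apply/exists_inP; exists q => //=; rewrite SubK.
Qed.

Lemma M1_accepts : accepts M1 (fact (lang M)).
Proof.
move=> w; rewrite /lang /=; split.
  case/set0Pn=> p /key [q _ e].
  have uq := valP q; have up := valP p.
  move: uq up => /pbP [[u hu] _] /pbP [_ [v hv]].
  by exists u, v; rewrite !ds_cat hu e.
case=> u [v]; rewrite !ds_cat => hf.
set q0 := delta_star (init M) u; set p0 := delta_star q0 w.
have uq : useful q0.
  by apply/pbP; split; [exists u | exists (w ++ v); rewrite ds_cat].
have up : useful p0.
  by apply/pbP; split; [exists (u ++ w); rewrite ds_cat | exists v].
apply/set0Pn; exists (Sub p0 up : sub); apply/key.
by exists (Sub q0 uq : sub) => //; rewrite !SubK.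
Qed.

Definition Mall : dfa Sigma := @DFA Sigma unit tt (fun _ _ => tt) (fun _ => true).

Lemma part1 : exists M' : dfa Sigma,
    accepts M' (fact (lang M)) /\ #|state M'| <= 2 ^ (#|state M| - 1).
Proof.
case: (boolP [forall q, useful q]) => [/forallP hall | hn].
  exists Mall; split; last by rewrite card_unit expn_gt0.
  move=> w; split=> // _.
  have := hall (delta_star (init M) w) => /pbP [_ [v hv]].
  by exists [::], v; rewrite /lang /= ds_cat.
exists M1; split; first exact: M1_accepts.
have -> : #|state M1| = 2 ^ #|sub|.
  by rewrite -[in RHS]cardsT -card_powerset powersetT cardsT.
apply: leq_pexp2l => //.
rewrite card_sig.
move: hn; rewrite negb_forall => /existsP [x hx].
rewrite -(cardC [pred q | useful q]).
have : 0 < #|[predC [pred q | useful q]]|.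
  by apply/card_gt0P; exists x; rewrite !inE.
by case: #|[predC _]| => // k _; rewrite addnS subn1 /= leq_addr.
Qed.
End Part1.

Section Part2.
Variable m : nat.
Definition I := 'I_m.+1.
Definition Sg : finType := {ffun I -> I}.
Definition dl (q : I) (f : Sg) : I := if q == ord0 then ord0 else f q.
Definition Mn : dfa Sg := @DFA Sg I ord_max dl (fun q => q != ord0).
Definition fS (S : {set I}) : Sg := [ffun q => if q \in S then q else ord0].
Definition gx (x : I) : Sg := [ffun q => if q == x then x else ord0].

Lemma dead v : @delta_star _ Mn ord0 v = ord0.
Proof. by elim: v => //= a v IH; rewrite ds_cons /= /dl eqxx. Qed.

Lemma comp S x q : dl (dl q (fS S)) (gx x) =
  if (q != ord0) && (q \in S) && (q == x) then x else ord0.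
Proof.
rewrite /dl; case: (q =P ord0) => [->|/eqP nq]; first by rewrite eqxx.
rewrite ?(negbTE nq) /= !ffunE; case: (q \in S) => /=; first by rewrite (negbTE nq).
by [].
Qed.

Lemma fact_char S x : x != ord0 ->
  (fact (lang Mn) [:: fS S; gx x] <-> x \in S).
Proof.
move=> nx; split.
  case=> u [v]; rewrite /lang !ds_cat.
  set q := delta_star _ u.
  have -> : @delta_star _ Mn q [:: fS S; gx x] = dl (dl q (fS S)) (gx x) by [].
  rewrite comp; case: ifP => [/andP [/andP [_ qS] /eqP <-] //|_].
  by rewrite (dead v) /Mn.
move=> xS; exists [:: [ffun _ => x]], [::].
rewrite /lang !ds_cat.
have nm : (ord_max : I) != ord0.
  apply: contraNneq nx => hm; have hm2 : m = 0 := congr1 val hm.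
  by rewrite -(inj_eq val_inj) /= -leqn0 -ltnS -hm2 ltn_ord.
have -> : @delta_star _ Mn (init Mn) [:: [ffun _ => x]] = x.
  by rewrite /= /dl (negbTE nm) ffunE.
have -> : @delta_star _ Mn x [:: fS S; gx x] = dl (dl x (fS S)) (gx x) by [].
by rewrite comp nx xS eqxx /=.
Qed.

Lemma lower (M' : dfa Sg) : accepts M' (fact (lang Mn)) -> 2 ^ m <= #|state M'|.
Proof.
move=> acc.
pose F (S : {set I}) := @delta_star _ M' (init M') [:: fS S].
have inj : {in powerset [set~ (ord0 : I)] &, injective F}.
  move=> S T; rewrite !powersetE => /subsetP hS /subsetP hT FST.
  apply/setP => x.
  case: (x =P ord0) => [->|/eqP nx].
    apply/idP/idP => [/hS|/hT]; by rewrite !inE eqxx.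
  apply/idP/idP => h.
    apply/(fact_char T nx)/acc; have := (fact_char S nx).2 h => /acc.
    by rewrite /lang /delta_star /=; move: FST; rewrite /F /delta_star /= => ->.
  apply/(fact_char S nx)/acc; have := (fact_char T nx).2 h => /acc.
  by rewrite /lang /delta_star /=; move: FST; rewrite /F /delta_star /= => ->.
have := @leq_card_in _ _ F _ inj.
by rewrite card_powerset cardsC1 card_ord.
Qed.
End Part2.

Theorem mainTheorem14 :
  (forall (Sigma : finType) (M : dfa Sigma),
      exists M' : dfa Sigma,
        accepts M' (fact (lang M)) /\ #|state M'| <= 2 ^ (#|state M| - 1)) /\
  (forall n : nat, 1 <= n ->
      exists (Sigma : finType) (M : dfa Sigma),
        #|state M| = n /\ minimal_dfa_size (fact (lang M)) (2 ^ (n - 1))).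
Proof.
split; first exact: part1.
case=> [|m] // _.
exists (Sg m), (Mn m).
have cM : #|state (Mn m)| = m.+1 by rewrite card_ord.
split=> //; rewrite subn1 /=; split; last exact: lower.
have [M' [acc le]] := part1 (Mn m).
exists M'; split => //; apply/eqP; rewrite eqn_leq lower // andbT.
by move: le; rewrite cM subn1.
Qed.
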